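(* Let $G$ be a finite simple graph whose vertices carry positive integer weights, let $t\in\mathbb{N}$, and let $v\in V(G)$ have weight $t$. Let $G(v)$ denote the weighted graph obtained from $G$ by replacing $v$ with an independent set $\{v_1,\dots,v_t\}$ of $t$ new vertices, each of weight $1$, where each $v_j$ is adjacent to exactly the vertices $w$ that were adjacent to $v$ in $G$; all other vertices, edges and weights are unchanged. Then weighted Grim played on $G$ and weighted Grim played on $G(v)$ have the same outcome: $G$ is an $\mathcal{N}$ position if and only if $G(v)$ is an $\mathcal{N}$ position.
   Context: Grim is a two-player game on a finite simple undirected graph. Any isolated vertices of the starting graph are deleted before play begins. Players alternate moves; in ordinary (unweighted) Grim a move consists of selecting a vertex of the current graph and deleting it together with all its incident edges, after which every vertex that has become isolated is also deleted. The player who makes the last legal move wins (a player facing the empty graph has no move and loses). In weighted Grim each vertex carries a positive integer weight; a vertex of weight $t$ is deleted only once it has been selected $t$ times (each selection is a move and lowers its remaining weight by one, the selection that brings it to zero deleting it with its incident edges), or when it becomes isolated, in which case it is deleted; ordinary Grim is weighted Grim with all weights equal to $1$. A position is an $\mathcal{N}$ position if the player about to move has a winning strategy, and a $\mathcal{P}$ position otherwise. *)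

(* Defs.v *)
From mathcomp Require Import all_boot.
Set Implicit Arguments. Unset Strict Implicit. Unset Printing Implicit Defensive.

(* Weighted Grim on a finite simple graph (T, e), e symmetric and irreflexive.
   A position is a weight function w : T -> nat; vertex x is present iff
   0 < w x (remaining weight). *)

Definition clean (T : finType) (e : rel T) (w : T -> nat) : T -> nat :=
  fun x => if [exists y, e x y && (0 < w y)] then w x else 0.

Definition grim_move (T : finType) (e : rel T) (w : T -> nat) (v : T) : T -> nat :=
  clean e (fun x => if x == v then (w x).-1 else w x).

Fixpoint win_fuel (T : finType) (e : rel T) (n : nat) (w : T -> nat) : bool :=
  match n with
  | 0 => false
  | n'.+1 => [exists v, (0 < w v) && ~~ win_fuel e n' (grim_move e w v)]
  end.

(* The starting weighted graph (with isolated vertices deleted first) is an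
   N position. Fuel = total weight, which bounds the length of any play. *)
Definition grim_N (T : finType) (e : rel T) (w : T -> nat) : bool :=
  win_fuel e (\sum_(x : T) w x) (clean e w).

Definition blowT (T : finType) (v : T) (t : nat) : finType :=
  ({x : T | x != v} + 'I_t)%type.

Definition blow_e (T : finType) (e : rel T) (v : T) (t : nat) : rel (blowT v t) :=
  fun a b => match a, b with
  | inl x, inl y => e (val x) (val y)
  | inl x, inr _ => e (val x) v
  | inr _, inl y => e v (val y)
  | inr _, inr _ => false
  end.

Definition blow_w (T : finType) (w : T -> nat) (v : T) (t : nat) : blowT v t -> nat :=
  fun a => match a with
  | inl x => w (val x)
  | inr _ => 1
  end.

Arguments blow_e {T} e v t.
Arguments blow_w {T} w v t.

(* Main.v *)
Require Import Defs.
From mathcomp Require Import all_boot.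
Set Implicit Arguments. Unset Strict Implicit. Unset Printing Implicit Defensive.

Section G.
Variables (T : finType) (e : rel T) (e_sym : symmetric e) (e_irr : irreflexive e)
  (v : T) (t : nat).

Local Notation T' := (blowT v t).
Local Notation e' := (blow_e e v t).

Definition R (w : T -> nat) (w' : T' -> nat) :=
  [/\ forall x : {x : T | x != v}, w' (inl x) = w (val x),
      forall j, w' (inr j) <= 1 &
      #|[pred j : 'I_t | 0 < w' (inr j)]| = w v].

Lemma cond_inl w w' (x : {x : T | x != v}) : R w w' ->
  [exists b, e' (inl x) b && (0 < w' b)] = [exists y, e (val x) y && (0 < w y)].
Proof.
case=> H1 H2 H3; apply/existsP/existsP.
- case=> -[y|j] /andP[/= exy wy].
  + by exists (val y); rewrite exy -H1.
  + exists v; apply/andP; split; first exact: exy.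
    by rewrite -H3; apply/card_gt0P; exists j.
- case=> y /andP[exy wy]; have [eyv|yv] := eqVneq y v.
  + subst y; move: wy; rewrite -H3 => /card_gt0P[j jin].
    by exists (inr j); rewrite /= exy.
  + by exists (inl (exist _ y yv)); rewrite /= exy H1.
Qed.

Lemma cond_inr w w' (j : 'I_t) : R w w' ->
  [exists b, e' (inr j) b && (0 < w' b)] = [exists y, e v y && (0 < w y)].
Proof.
case=> H1 H2 H3; apply/existsP/existsP.
- case=> -[y|k] /andP[/= exy wy] //.
  by exists (val y); rewrite exy -H1.
- case=> y /andP[exy wy]; have [eyv|yv] := eqVneq y v.
  + by move: exy; rewrite eyv e_irr.
  + by exists (inl (exist _ y yv)); rewrite /= exy H1.
Qed.

Lemma clean_R w w' : R w w' -> R (clean e w) (clean e' w').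
Proof.
move=> HR; have HR' := HR; case: HR' => H1 H2 H3; split.
- by move=> x; rewrite /clean (cond_inl x HR) H1.
- by move=> j; rewrite /clean; case: ifP.
- rewrite /clean; case: ifP => c.
  + rewrite -H3; apply: eq_card => j /=; by rewrite (cond_inr j HR) c.
  + apply: eq_card0 => j /=; by rewrite (cond_inr j HR) c.
Qed.

Lemma move_inl w w' (x : {x : T | x != v}) : R w w' ->
  R (grim_move e w (val x)) (grim_move e' w' (inl x)).
Proof.
case=> H1 H2 H3; apply: clean_R; split.
- move=> y /=; rewrite H1.
  have -> : (inl y == inl x :> T') = (val y == val x) by [].
  by [].
- by move=> j /=.
- rewrite /=. have -> : (v == val x) = false by apply/negbTE; rewrite eq_sym (valP x).
  by [].
Qed.

Lemma move_inr w w' (j0 : 'I_t) : R w w' -> 0 < w' (inr j0) ->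
  R (grim_move e w v) (grim_move e' w' (inr j0)).
Proof.
case=> H1 H2 H3 Hj; apply: clean_R; split.
- move=> y /=; rewrite H1.
  by have -> : (val y == v) = false by apply/negbTE; apply: (valP y).
- move=> j /=; case: ifP => _ //; by rewrite (leq_trans (leq_pred _) (H2 j)).
- rewrite /= eqxx -H3 [in RHS](cardD1 j0) inE Hj add1n /=.
  apply: eq_card => j; rewrite !inE /=.
  have -> : (inr j == inr j0 :> T') = (j == j0) by [].
  case: eqP => [->|_] //=.
  by have := H2 j0; move: (w' (inr j0)) Hj => [|[|]].
Qed.

Lemma win_R n : forall w w', R w w' -> win_fuel e n w = win_fuel e' n w'.
Proof.
elim: n => [//|n IH] w w' HR /=; have HR' := HR; case: HR' => H1 H2 H3.
apply/existsP/existsP.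
- case=> x /andP[wx nw]; have [exv|xv] := eqVneq x v.
  + subst x; move: wx; rewrite -H3 => /card_gt0P[j jin].
    exists (inr j); rewrite inE in jin; rewrite jin /=.
    by rewrite -(IH _ _ (move_inr HR jin)).
  + exists (inl (exist _ x xv)); rewrite H1 wx /=.
    by rewrite -(IH _ _ (move_inl (exist _ x xv) HR)).
- case=> -[x|j] /andP[wx nw].
  + exists (val x); rewrite -H1 wx /=.
    by rewrite (IH _ _ (move_inl x HR)).
  + exists v; rewrite -H3 (IH _ _ (move_inr HR wx)) nw andbT.
    by apply/card_gt0P; exists j; rewrite inE.
Qed.

End G.

Lemma sum_sig (T : finType) (v : T) (F : T -> nat) :
  \sum_(x : {x : T | x != v}) F (val x) = \sum_(x | x != v) F x.
Proof.
symmetry.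
rewrite (reindex_omap (val : {x : T | x != v} -> T) insub); last first.
  by move=> i iv; rewrite insubT.
by apply: eq_bigl=> -[i iA]/=; rewrite insubT ?iA /= eqxx.
Qed.

Theorem lemma2p2 (T : finType) (e : rel T) (e_sym : symmetric e)
  (e_irr : irreflexive e) (w : T -> nat) (w_pos : forall x, 0 < w x)
  (v : T) (t : nat) (wv : w v = t) :
  grim_N e w <-> grim_N (blow_e e v t) (blow_w w v t).
Proof.
have HR : @R T v t w (blow_w w v t).
  split=> // ; rewrite wv -[t in RHS]card_ord; apply: eq_card => j; by rewrite inE.
rewrite /grim_N (win_R e_irr _ (clean_R e_irr HR)).
have -> : \sum_(x : T) w x = \sum_(x : blowT v t) blow_w w v t x.
  rewrite big_sumType /= sum_sig (bigD1 v) //= addnC; congr (_ + _).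
  by rewrite sum1_card card_ord wv.
by [].
Qed.
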